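(* Let $n\in\mathbb N$ and let $(x_t)_{t\in\Omega}$ be a continuous frame for $\mathbb R^n$ with lower frame bound $A$. Then for every $x\in\mathbb R^n$, $(x_t)_{t\in\Omega}$ does $A^{-1/2}$-stable phase retrieval near $x$.
   Context: A continuous frame $(x_t)_{t\in\Omega}$ for a Hilbert space $H$ over a measure space $(\Omega,\mu)$ satisfies $A\|x\|^2\le\int_\Omega|\langle x,x_t\rangle|^2d\mu\le B\|x\|^2$ for all $x\in H$ with $B\ge A>0$ ($A$ a lower frame bound); its analysis operator is $\Theta(x)=(\langle x,x_t\rangle)_{t\in\Omega}\in L_2(\Omega)$, $|\Theta x|=(|\langle x,x_t\rangle|)_{t\in\Omega}$. For $x,y$ with $x\neq\lambda y$ for all scalars $|\lambda|=1$, set $\Psi(x,y)=\||\Theta x|-|\Theta y|\|_{L_2(\Omega)}/\min_{|\lambda|=1}\|x-\lambda y\|$. For $C>0$, the frame does $C$-stable phase retrieval near $x$ if $\liminf_{y\to x,\ y\notin\{\lambda x:|\lambda|=1\}} C\,\Psi(x,y)\ge1$. *)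

(* Defs.v *)
From HB Require Import structures.
From mathcomp Require Import all_boot all_order all_algebra.
From mathcomp Require Import all_classical all_reals all_analysis.
Set Implicit Arguments. Unset Strict Implicit. Unset Printing Implicit Defensive.
Import Order.TTheory GRing.Theory Num.Theory.
Import numFieldNormedType.Exports.
Local Open Scope classical_set_scope.
Local Open Scope ring_scope.

(* R^n is modelled as row vectors 'rV[R]_n with the standard (Euclidean)
   inner product and norm (NOT the library's max-norm on matrices). *)
Definition dotr {R : realType} {n : nat} (u v : 'rV[R]_n) : R :=
  \sum_(i < n) u 0 i * v 0 i.

Definition enorm {R : realType} {n : nat} (u : 'rV[R]_n) : R :=
  Num.sqrt (dotr u u).

Definition cont_frame_lower {R : realType} {d : measure_display}
  {Omega : measurableType d} (mu : {measure set Omega -> \bar R}) {n : nat}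
  (xt : Omega -> 'rV[R]_n) (A : R) : Prop :=
  exists B : R, 0 < A /\ A <= B /\
    forall x : 'rV[R]_n,
      measurable_fun setT (fun t => dotr x (xt t)) /\
      ((A * enorm x ^+ 2)%:E <= \int[mu]_t ((`|dotr x (xt t)| ^+ 2)%:E))%E /\
      (\int[mu]_t ((`|dotr x (xt t)| ^+ 2)%:E) <= (B * enorm x ^+ 2)%:E)%E.

(* Psi(x,y) = || |Theta x| - |Theta y| ||_{L2(mu)} / min_{|lam|=1} |x - lam y|.
   Over the reals the unimodular scalars are lam = 1 and lam = -1. *)
Definition Psi {R : realType} {d : measure_display}
  {Omega : measurableType d} (mu : {measure set Omega -> \bar R}) {n : nat}
  (xt : Omega -> 'rV[R]_n) (x y : 'rV[R]_n) : \bar R :=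
  (Lnorm mu 2%:E (fun t => (`|dotr x (xt t)| - `|dotr y (xt t)|)%:E) *
   ((Num.min (enorm (x - y)) (enorm (x + y)))^-1)%:E)%E.

Definition stable_pr_near {R : realType} {d : measure_display}
  {Omega : measurableType d} (mu : {measure set Omega -> \bar R}) {n : nat}
  (xt : Omega -> 'rV[R]_n) (C : R) (x : 'rV[R]_n) : Prop :=
  (1%:E <= limf_einf (fun y : 'rV[R]_n => C%:E * Psi mu xt x y)
            (within [set y | forall lam : R, (`|lam| = 1)%R -> y <> (lam *: x)%R]
                    (nbhs x)))%E.

(* Main.v *)
Require Import Defs.
From HB Require Import structures.
From mathcomp Require Import all_boot all_order all_algebra.
From mathcomp Require Import all_classical all_reals all_analysis.
From mathcomp Require Import measurable_realfun ring lra.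
Import numFieldNormedType.Exports.
Local Open Scope classical_set_scope.
Import Order.TTheory GRing.Theory Num.Theory.
Local Open Scope ring_scope.
Set Implicit Arguments. Unset Strict Implicit.





Lemma dotrBl (R : realType) (n : nat) (u v w : 'rV[R]_n) : dotr (u - v) w = dotr u w - dotr v w.
Proof. by rewrite /dotr -sumrB; apply: eq_bigr => i _; rewrite !mxE mulrBl. Qed.

Lemma dotr_ge0 (R : realType) (n : nat) (u : 'rV[R]_n) : 0 <= dotr u u.
Proof. by apply: sumr_ge0 => i _; rewrite -expr2 sqr_ge0. Qed.

Lemma enorm_sq (R : realType) (n : nat) (u : 'rV[R]_n) : enorm u ^+ 2 = dotr u u.
Proof. by rewrite /enorm sqr_sqrtr // dotr_ge0. Qed.

Lemma enorm_ge0 (R : realType) (n : nat) (u : 'rV[R]_n) : 0 <= enorm u.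
Proof. exact: sqrtr_ge0. Qed.

Lemma dotr_delta (R : realType) (n : nat) (i : 'I_n) (v : 'rV[R]_n) : dotr (delta_mx 0 i) v = v 0 i.
Proof.
rewrite /dotr (bigD1 i) //= big1 ?addr0; first by rewrite mxE !eqxx mul1r.
by move=> j ji; rewrite mxE eqxx /= (negbTE ji) mul0r.
Qed.

Lemma dotr_quad (R : realType) (n : nat) (a b : R) (u w : 'rV[R]_n) :
  \sum_(i < n) (a * u 0 i + b * w 0 i) ^+ 2 =
  a ^+ 2 * dotr u u + 2 * a * b * dotr u w + b ^+ 2 * dotr w w.
Proof.
rewrite /dotr !mulr_sumr -!big_split /=; apply: eq_bigr => i _; ring.
Qed.

Lemma cauchy_schwarz (R : realType) (n : nat) (u w : 'rV[R]_n) : dotr u w ^+ 2 <= dotr u u * dotr w w.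
Proof.
have W0 := dotr_ge0 w.
have [Wz|Wp] := eqVneq (dotr w w) 0.
  have w0 : forall i, w 0 i = 0.
    move=> i; have /eqP := Wz; rewrite /dotr psumr_eq0; last first.
      by move=> j _; rewrite -expr2 sqr_ge0.
    by move/allP => /(_ i (mem_index_enum _)) /=; rewrite mulf_eq0 orbb => /eqP.
  have -> : dotr u w = 0 by rewrite /dotr big1 // => i _; rewrite w0 mulr0.
  by rewrite Wz expr0n /= mulr0.
have : 0 <= \sum_(i < n) (dotr w w * u 0 i + (- dotr u w) * w 0 i) ^+ 2.
  by apply: sumr_ge0 => i _; exact: sqr_ge0.
rewrite dotr_quad => H.
have Wpos : 0 < dotr w w by rewrite lt0r Wp W0.
have : 0 <= dotr w w * (dotr w w * dotr u u - dotr u w ^+ 2).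
  set X := (X in 0 <= X) in H.
  suff -> : dotr w w * (dotr w w * dotr u u - dotr u w ^+ 2) = X by [].
  rewrite /X; ring.
rewrite pmulr_rge0 // subr_ge0 => H2; by rewrite mulrC.
Qed.

Lemma pointwise (R : realType) (a b G e h : R) :
  (b - a) ^+ 2 <= e ^+ 2 * G -> 0 <= e -> e <= h ->
  (b - a) ^+ 2 <= (`|a| - `|b|) ^+ 2 +
     e ^+ 2 * (if (0 < a ^+ 2) && (a ^+ 2 < h ^+ 2 * G) then G else 0).
Proof.
move=> H e0 eh.
have eG : 0 <= e ^+ 2 * G by apply: le_trans H; apply: sqr_ge0.
have Hsq : (`|a| - `|b|) ^+ 2 = a ^+ 2 + b ^+ 2 - 2 * `|a * b|.
  rewrite normrM; rewrite sqrrB !real_normK ?num_real //; ring.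
have [ab0|ab0] := leP 0 (a * b).
  have : (b - a) ^+ 2 = (`|a| - `|b|) ^+ 2.
    by rewrite Hsq ger0_norm //; ring.
  move=> ->; rewrite lerDl; case: ifP => _; last by rewrite mulr0.
  done.
have a2 : 0 < a ^+ 2.
  have an0 : a != 0 by apply: contraTneq ab0 => ->; rewrite mul0r ltxx.
  by rewrite lt0r sqrf_eq0 an0 sqr_ge0.
have ab2 : a ^+ 2 < (b - a) ^+ 2.
  have : (b - a) ^+ 2 - a ^+ 2 = b ^+ 2 - 2 * (a * b) by ring.
  move=> E; rewrite -subr_gt0 E; have := sqr_ge0 b; lra.
have G0 : 0 <= G.
  case: (leP 0 G) => // G0.
  have : e ^+ 2 * G <= 0 by rewrite mulr_ge0_le0 // ?sqr_ge0 // ltW.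
  lra.
have eh2 : e ^+ 2 * G <= h ^+ 2 * G.
  apply: ler_wpM2r => //; apply: lerXn2r => //; rewrite nnegrE //; lra.
have -> : (0 < a ^+ 2) && (a ^+ 2 < h ^+ 2 * G) by rewrite a2 /=; lra.
rewrite /=; have := sqr_ge0 (`|a| - `|b|); lra.
Qed.
Lemma measurable_G (R : realType) d (Omega : measurableType d) n (xt : Omega -> 'rV[R]_n) :
 (forall x, measurable_fun setT (fun t => dotr x (xt t))) ->
 measurable_fun setT (fun t => dotr (xt t) (xt t)).
Proof.
move=> hm; rewrite /dotr; apply: measurable_sum => i.
have e : (fun t => xt t 0 i) = (fun t => dotr (delta_mx 0 i) (xt t)).
  by apply/funext => t; rewrite dotr_delta.
by apply: measurable_realfun.measurable_funM; rewrite e; apply: hm.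
Qed.

Lemma integrable_G (R : realType) d (Omega : measurableType d)
 (mu : {measure set Omega -> \bar R}) n (xt : Omega -> 'rV[R]_n) (B : R) :
 (forall x, measurable_fun setT (fun t => dotr x (xt t))) ->
 (forall x, (\int[mu]_t ((`|dotr x (xt t)| ^+ 2)%:E) <= (B * enorm x ^+ 2)%:E)%E) ->
 mu.-integrable setT (fun t => (dotr (xt t) (xt t))%:E).
Proof.
move=> hm hB; apply/integrableP; split.
  by apply/measurable_EFinP; apply: measurable_G.
have e : (fun t => `|(dotr (xt t) (xt t))%:E|%E) =
   (fun t => \sum_(i < n) ((`|dotr (delta_mx 0 i) (xt t)| ^+ 2)%:E))%E.
  apply/funext => t; rewrite sumEFin gee0_abs ?lee_fin ?dotr_ge0 //; congr (_%:E).
  by apply: eq_bigr => i _; rewrite dotr_delta real_normK ?num_real // expr2.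
rewrite e (@ge0_integral_sum _ _ _ mu setT measurableT _
   (fun i t => ((`|dotr (delta_mx 0 i) (xt t)| ^+ 2)%:E)%E)); last 2 first.
  move=> i; apply/measurable_EFinP; apply: measurable_realfun.measurable_funX.
  by apply: measurableT_comp => //; apply: hm.
  by move=> i t _; rewrite lee_fin sqr_ge0.
apply: lte_sum_pinfty => i _.
by apply: (le_lt_trans (hB _)); apply: ltry.
Qed.

Lemma eta_exists (R : realType) d (Omega : measurableType d)
 (mu : {measure set Omega -> \bar R}) n (xt : Omega -> 'rV[R]_n) (B : R) (a : Omega -> R) :
 (forall x, measurable_fun setT (fun t => dotr x (xt t))) ->
 (forall x, (\int[mu]_t ((`|dotr x (xt t)| ^+ 2)%:E) <= (B * enorm x ^+ 2)%:E)%E) ->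
 measurable_fun setT a ->
 forall del : R, 0 < del -> exists eta : R, 0 < eta /\
   (\int[mu]_t ((if (0 < a t ^+ 2) && (a t ^+ 2 < eta ^+ 2 * dotr (xt t) (xt t))
                 then dotr (xt t) (xt t) else 0)%:E) <= del%:E)%E.
Proof.
move=> hm hB ma del del0.
set G := fun t => dotr (xt t) (xt t).
have mG : measurable_fun setT G by apply: measurable_G.
pose h (eta : R) t := if (0 < a t ^+ 2) && (a t ^+ 2 < eta ^+ 2 * G t) then G t else 0.
pose f_ (k : nat) t := ((h k.+1%:R^-1 t)%:E)%E.
have mh : forall eta, measurable_fun setT (h eta).
  move=> eta; apply: measurable_fun_ifT => //.
  apply: measurable_and.
    apply: measurable_fun_ltr => //.
    by apply: measurable_realfun.measurable_funX.
  apply: measurable_fun_ltr.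
    by apply: measurable_realfun.measurable_funX.
  by apply: measurable_realfun.measurable_funM.
have mf_ : forall k, measurable_fun setT (f_ k).
  by move=> k; apply/measurable_EFinP; apply: mh.
have ff : {ae mu, forall t, setT t -> f_ ^~ t @ \oo --> (fun _ => 0%E) t}.
  apply: aeW => t _.
  apply: cvg_near_cst.
  have [a0|an0] := eqVneq (a t ^+ 2) 0.
    by near=> k; rewrite /f_ /h a0 ltxx.
  have G0 := dotr_ge0 (xt t).
  have a2 : 0 < a t ^+ 2 by rewrite lt0r an0 sqr_ge0.
  have [N hN] : exists N : nat, G t / a t ^+ 2 < N%:R.
    by exists (Num.trunc (G t / a t ^+ 2)).+1; apply: truncnS_gt.
  near=> k.
  have hk : (N <= k)%N by near: k; exists N.
  have : (k.+1%:R^-1)^+2 * G t <= a t ^+ 2.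
    have kp : 0 < (k.+1%:R : R) ^+ 2 by rewrite exprn_gt0 // ltr0n.
    rewrite exprVn mulrC ler_pdivrMr //.
    move: hN; rewrite ltr_pdivrMr // => hN.
    apply: ltW; apply: (lt_le_trans hN); rewrite mulrC; apply: ler_wpM2l.
      exact: ltW.
    have hk1 : (N%:R : R) <= k.+1%:R by rewrite ler_nat; apply: leqW.
    apply: (le_trans hk1); rewrite expr2 ler_peMr // ?ler1n // ler0n.
  by move=> hle; rewrite /f_ /h a2 /= ltNge hle.
have fg : {ae mu, forall t k, setT t -> (`|f_ k t| <= (G t)%:E)%E}.
  apply: aeW => t k _.
  by rewrite /f_ /h; case: ifP => _; rewrite gee0_abs ?lee_fin ?dotr_ge0.
have [_ _ cv] := @dominated_convergence _ _ _ mu setT measurableT f_ (fun _ => 0%E)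
   (fun t => (G t)%:E) mf_ (measurable_cst _) ff (integrable_G hm hB) fg.
rewrite integral0 in cv.
have d0 : (0%:E < del%:E)%E by rewrite lte_fin.
have := cv _ (open_ereal_lt' d0).
move=> /= [N _ HN]; exists (N.+1%:R^-1); split; first by rewrite invr_gt0 ltr0n.
apply: ltW; exact: (HN N (leqnn N)).
Unshelve. all: by end_near. Qed.
Lemma key (R : realType) d (Omega : measurableType d)
 (mu : {measure set Omega -> \bar R}) n (xt : Omega -> 'rV[R]_n) (A : R) (x y : 'rV[R]_n) (eta del : R) :
 (forall x, measurable_fun setT (fun t => dotr x (xt t))) ->
 (forall z, ((A * enorm z ^+ 2)%:E <= \int[mu]_t ((`|dotr z (xt t)| ^+ 2)%:E))%E) ->
 enorm (y - x) <= eta ->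
 (\int[mu]_t ((if (0 < dotr x (xt t) ^+ 2) && (dotr x (xt t) ^+ 2 < eta ^+ 2 * dotr (xt t) (xt t))
     then dotr (xt t) (xt t) else 0)%:E) <= del%:E)%E ->
 (((A - del) * enorm (y - x) ^+ 2)%:E <=
   \int[mu]_t (((`|dotr x (xt t)| - `|dotr y (xt t)|) ^+ 2)%:E))%E.
Proof.
move=> hm hlow heta hdel.
set e := enorm (y - x).
have e0 : 0 <= e by apply: enorm_ge0.
set h := fun t => if (0 < dotr x (xt t) ^+ 2) && (dotr x (xt t) ^+ 2 < eta ^+ 2 * dotr (xt t) (xt t))
     then dotr (xt t) (xt t) else 0.
have h0 : forall t, 0 <= h t.
  by move=> t; rewrite /h; case: ifP => _ //; apply: dotr_ge0.
have mG : measurable_fun setT (fun t => dotr (xt t) (xt t)).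
  rewrite /dotr; apply: measurable_sum => i.
  have ee : (fun t => xt t 0 i) = (fun t => dotr (delta_mx 0 i) (xt t)).
    by apply/funext => t; rewrite dotr_delta.
  by apply: measurable_realfun.measurable_funM; rewrite ee; apply: hm.
have mh : measurable_fun setT h.
  apply: measurable_fun_ifT => //.
  apply: measurable_and.
    apply: measurable_fun_ltr => //.
    by apply: measurable_realfun.measurable_funX.
  apply: measurable_fun_ltr.
    by apply: measurable_realfun.measurable_funX.
  by apply: measurable_realfun.measurable_funM.
have mD : measurable_fun setT (fun t => (`|dotr x (xt t)| - `|dotr y (xt t)|) ^+ 2).
  apply: measurable_realfun.measurable_funX; apply: measurable_funB;
  by apply: measurableT_comp => //; apply: hm.
have H2 : (\int[mu]_t ((`|dotr (y - x) (xt t)| ^+ 2)%:E) <=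
   \int[mu]_t (((`|dotr x (xt t)| - `|dotr y (xt t)|) ^+ 2)%:E + (e ^+ 2)%:E * (h t)%:E))%E.
  apply: (@ge0_le_integral _ _ _ mu setT measurableT).
  - by move=> t _; rewrite lee_fin sqr_ge0.
  - apply/measurable_EFinP; apply: measurable_realfun.measurable_funX.
    by apply: measurableT_comp => //; apply: hm.
  - apply: emeasurable_funD.
      by apply/measurable_EFinP.
    by apply: emeasurable_funM => //; apply/measurable_EFinP.
  move=> t _; rewrite -EFinM -EFinD lee_fin real_normK ?num_real // dotrBl.
  apply: pointwise => //.
  by rewrite -dotrBl enorm_sq; apply: cauchy_schwarz.
rewrite ge0_integralD // in H2; last first.
  - by apply: emeasurable_funM => //; apply/measurable_EFinP.
  - by move=> t _; rewrite -EFinM lee_fin mulr_ge0 ?sqr_ge0.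
  - by apply/measurable_EFinP.
  - by move=> t _; rewrite lee_fin sqr_ge0.
rewrite ge0_integralZl_EFin // in H2; last first.
  - by rewrite sqr_ge0.
  - by apply/measurable_EFinP.
  - by move=> t _; rewrite lee_fin.
have H3 := le_trans (hlow (y - x)) H2.
have hdel' : (\int[mu]_t (h t)%:E <= del%:E)%E := hdel.
have J0 : (0 <= \int[mu]_t (h t)%:E)%E.
  by apply: integral_ge0 => t _; rewrite lee_fin.
have I0 : (0 <= \int[mu]_t (((`|dotr x (xt t)| - `|dotr y (xt t)|) ^+ 2)%R%:E))%E.
  by apply: integral_ge0 => t _; rewrite lee_fin sqr_ge0.
fold e in H3.
move: (\int[mu]_t (h t)%:E)%E (\int[mu]_t (((`|dotr x (xt t)| - `|dotr y (xt t)|) ^+ 2)%R%:E))%E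
  H3 hdel' J0 I0 => [s| |] [r| |] //=; rewrite ?leey //.
rewrite -EFinM -EFinD !lee_fin => H3 hs s0 r0.
have : e ^+ 2 * s <= e ^+ 2 * del by apply: ler_wpM2l => //; apply: sqr_ge0.
move: H3; set E := e ^+ 2 => H3 H4.
have -> : (A - del) * E = A * E - E * del by ring.
lra.
Qed.
Lemma Lnorm_sq (R : realType) d (Omega : measurableType d)
 (mu : {measure set Omega -> \bar R}) (u : Omega -> R) :
 Lnorm mu 2%:E (fun t => (u t)%:E) = ((\int[mu]_t ((u t ^+ 2)%:E)) `^ 2^-1)%E.
Proof.
rewrite unlock /=; congr (_ `^ _)%E; apply: eq_integral => t _.
by rewrite /= (@powR_mulrn _ _ 2) ?normr_ge0 // real_normK ?num_real.
Qed.

Lemma enormN (R : realType) n (u : 'rV[R]_n) : enorm (- u) = enorm u.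
Proof.
by rewrite /enorm /dotr; congr Num.sqrt; apply: eq_bigr => i _; rewrite !mxE mulrNN.
Qed.

Lemma enorm_gt0 (R : realType) n (u : 'rV[R]_n) : u != 0 -> 0 < enorm u.
Proof.
move=> u0; rewrite lt0r enorm_ge0 andbT; apply: contra u0 => /eqP.
rewrite /enorm => /eqP; rewrite sqrtr_eq0 => h.
have hz : dotr u u = 0 by apply/eqP; rewrite eq_le h dotr_ge0.
apply/eqP/matrixP => i j; rewrite (ord1 i) mxE.
move/eqP: hz; rewrite /dotr psumr_eq0; last by move=> k _; rewrite -expr2 sqr_ge0.
by move/allP => /(_ j (mem_index_enum _)) /=; rewrite mulf_eq0 orbb => /eqP.
Qed.

Unset Implicit Arguments.
Theorem theorem3p2 (R : realType) (d : measure_display) (Omega : measurableType d)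
  (mu : {measure set Omega -> \bar R}) (n : nat) (xt : Omega -> 'rV[R]_n) (A : R) :
  cont_frame_lower mu xt A ->
  forall x : 'rV[R]_n, stable_pr_near mu xt (Num.sqrt A)^-1 x.
Proof.
move=> [B [A0 [AB hF]]] x.
have hm : forall z, measurable_fun setT (fun t => dotr z (xt t)) := fun z => (hF z).1.
have hlow := fun z => (hF z).2.1.
have hup := fun z => (hF z).2.2.
rewrite /stable_pr_near limf_einfE.
set S := [set y | _].
pose F := fun y => (((Num.sqrt A)^-1)%:E * Psi mu xt x y)%E.
have sA : 0 < Num.sqrt A by rewrite sqrtr_gt0.
have main : forall g : R, 0 < g -> g < 1 ->
    ((1 - g)%:E <= ereal_sup [set ereal_inf [set F y | y in V] | V in within S (nbhs x)])%E.
  move=> g g0 g1.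
  set del := A * (1 - (1 - g) ^+ 2).
  have del0 : 0 < del.
    apply: mulr_gt0 => //; rewrite subr_gt0.
    rewrite expr2; have : 0 < 1 - g by rewrite subr_gt0.
    move=> h1; rewrite -{3}(mulr1 1); apply: ltr_pM => //; try lra.
  have [eta [eta0 heta]] := eta_exists hm hup (hm x) del0.
  set r := eta / n.+1%:R.
  have r0 : 0 < r by rewrite divr_gt0 // ltr0n.
  set V := [set y | S y /\ enorm (y - x) <= eta].
  apply: le_ereal_sup_tmp; exists (ereal_inf [set F y | y in V]).
    exists V => //.
    rewrite /within /=.
    near=> y => Sy; split => //.
    have bxy : ball x r y by near: y; apply: nbhsx_ballx.
    have hc : forall i, ((y - x) 0 i) ^+ 2 <= r ^+ 2.
      move=> i; case: bxy => _ /(_ 0 i); rewrite /ball /= => hb.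
      rewrite -real_normK ?num_real // -[r ^+ 2]real_normK ?num_real //.
      rewrite ler_sqr ?nnegrE ?normr_ge0 //; rewrite !mxE -normrN opprB.
      by rewrite ger0_norm ?ltW.
    have hs : enorm (y - x) ^+ 2 <= eta ^+ 2.
      rewrite enorm_sq /dotr.
      apply: (le_trans (y := \sum_(i < n) r ^+ 2)).
        by apply: ler_sum => i _; rewrite -expr2.
      rewrite sumr_const card_ord /r expr_div_n -mulr_natr.
      rewrite -mulrnAr -mulr_natr; apply: ler_piMr; first exact: sqr_ge0.
      rewrite mul1r.
      have cp : 0 < (n.+1%:R : R) ^+ 2 by rewrite exprn_gt0 // ltr0n.
      rewrite mulrC ler_pdivrMr // mul1r -natrX ler_nat.
      by rewrite expnS; apply: leq_trans (leqnSn n) _; apply: leq_pmulr; rewrite expn_gt0.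
    by move: hs; rewrite ler_sqr // nnegrE ?enorm_ge0 // ltW.
  apply: le_ereal_inf_tmp => _ [y [Sy hy] <-].
  have hk := key hm hlow hy heta.
  rewrite /F /Psi Lnorm_sq.
  set e := enorm (y - x) in hk *.
  have xy0 : x - y != 0.
    apply/eqP => h0; apply: (Sy 1); first by rewrite normr1.
    by rewrite scale1r; apply/esym/eqP; rewrite -subr_eq0 h0.
  have xpy0 : x + y != 0.
    apply/eqP => h0; apply: (Sy (-1)); first by rewrite normrN normr1.
    by rewrite scaleN1r; apply/eqP; rewrite -subr_eq0 opprK addrC h0.
  set m := Num.min (enorm (x - y)) (enorm (x + y)).
  have m0 : 0 < m by rewrite lt_min !enorm_gt0.
  have mle : m <= e by rewrite /m /e -opprB enormN ge_min lexx.
  have e0 : 0 <= e by apply: enorm_ge0.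
  have g0' : 0 < 1 - g by rewrite subr_gt0.
  set q := (1 - g) * Num.sqrt A * e.
  have q0 : 0 <= q by rewrite mulr_ge0 // mulr_ge0 // ?sqrtr_ge0 // ltW.
  have hq : ((q ^+ 2)%:E <= \int[mu]_t (((`|dotr x (xt t)| - `|dotr y (xt t)|) ^+ 2)%R%:E))%E.
    apply: le_trans hk; rewrite lee_fin le_eqVlt; apply/orP; left; apply/eqP.
    rewrite /q /del !exprMn sqr_sqrtr ?(ltW A0) //; ring.
  move: (\int[mu]_t (((`|dotr x (xt t)| - `|dotr y (xt t)|) ^+ 2)%R%:E))%E hq => [s| |] //= hq.
    have s0 : 0 <= s by apply: le_trans (sqr_ge0 q) _; rewrite -lee_fin.
    rewrite powR12_sqrt // -!EFinM lee_fin.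
    have sq : q <= Num.sqrt s.
      by rewrite -(ger0_norm q0) -sqrtr_sqr ler_sqrt // -lee_fin.
    have t1 : q * m^-1 <= Num.sqrt s * m^-1.
      by apply: ler_wpM2r => //; rewrite invr_ge0 ltW.
    have t2 : (Num.sqrt A)^-1 * (q * m^-1) = (1 - g) * (e / m).
      by rewrite /q; field; rewrite !gt_eqF.
    have t3 : 1 <= e / m by rewrite ler_pdivlMr // mul1r.
    have t4 : 1 - g <= (Num.sqrt A)^-1 * (q * m^-1).
      rewrite t2; rewrite -{1}(mulr1 (1 - g)); apply: ler_wpM2l => //; exact: ltW.
    apply: (le_trans t4); apply: ler_wpM2l => //; rewrite invr_ge0 ltW //.
  rewrite invr_eq0 pnatr_eq0 /=.
  rewrite mulyr gtr0_sg ?invr_gt0 // mul1e mulry gtr0_sg ?invr_gt0 // mul1e.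
  exact: leey.
apply/lee_subgt0Pr => g g0.
have [g1|g1] := ltP g 1; first by rewrite -EFinB; apply: main.
apply: le_trans (main 2^-1 _ _); last 2 first.
- by rewrite invr_gt0.
- by rewrite invf_lt1 // ltr1n.
rewrite -EFinB lee_fin; have : 0 < (2^-1 : R) by rewrite invr_gt0.
lra.
Unshelve. all: by end_near.
Qed.
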